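(* In the setting described in the context, there exists $N_0$ such that for every $(p,q)\in\mathbb{Z}^2$ with $|(p,q)|>N_0$ the lifted short arc $\widetilde s_{p,q}$ is defined and contained in $R$ (i.e.\ $s_{p,q}$ is $R$-close to $A$), and hence the short arc $s_{p,q}=\pi(\widetilde s_{p,q})$ is embedded in $M$. In particular, all but finitely many geodesics $\gamma_{p,q}$ have embedded short arcs.
   Context: Let $M=\mathbb{H}^3/\Gamma$ be a cusped orientable hyperbolic 3-manifold, $\Gamma\subset \mathrm{PSL}_2(\mathbb{C})$ discrete and torsion-free, with covering map $\pi:\mathbb{H}^3\to M$. Use the upper half-space model, points written $(z,h)$, $z\in\mathbb{C}$, $h>0$. Fix a cusp of $M$ and let $U$ be its maximal embedded horoball neighbourhood; its boundary $T$ is a torus with finitely many self-tangency points. Fix one such point $A$ (a ''bumping point''). Normalise (by conjugating $\Gamma$) so that $\pi^{-1}(T)$ contains the horosphere $H_\infty=\{h=1\}$ and the horosphere $H_0$ centred at $0$ of Euclidean diameter $1$, which touch at $A_{0,0}=(0,1)\in\pi^{-1}(A)$. The stabiliser of $\infty$ in $\Gamma$ is generated by $a=\begin{pmatrix}1&t_\alpha\\0&1\end{pmatrix}$, $b=\begin{pmatrix}1&t_\beta\\0&1\end{pmatrix}$ with $t_\alpha,t_\beta$ $\mathbb{R}$-linearly independent. Let $b_{0,0}=x_0t_\alpha+y_0t_\beta$ with $x_0,y_0\in[0,1)$ not both $0$ be such that there is $g\in\Gamma$ with $g(H_0)=H_\infty$, $g(0)=\infty$, $g(A_{0,0})=(b_{0,0},1)$;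 then $g=\begin{pmatrix}cb_{0,0}&-1/c\\c&0\end{pmatrix}$ for some $c\in\mathbb{C}$. For $(p,q)\in\mathbb{Z}^2$ put $b_{p,q}=b_{0,0}+pt_\alpha+qt_\beta$, $g_{p,q}=a^pb^qg$, let $\widetilde\gamma_{p,q}$ be the axis of $g_{p,q}$ in $\mathbb{H}^3$ and $\gamma_{p,q}=\pi(\widetilde\gamma_{p,q})$ the corresponding closed geodesic of $M$. For $|(p,q)|$ large, $\widetilde\gamma_{p,q}$ (a Euclidean semicircle from $z_-$ to $z_+$, where $z_\pm$ are the fixed points of $g_{p,q}$ with $z_-\to0$) meets $H_\infty$ in exactly two points, $C_{p,q}=(c_{p,q},1)$ nearer $z_-$ and $D_{p,q}=(d_{p,q},1)$ nearer $z_+$. The lifted short arc is the geodesic segment $\widetilde s_{p,q}=[g_{p,q}^{-1}(D_{p,q}),C_{p,q}]\subset\widetilde\gamma_{p,q}$, and the short arc is $s_{p,q}=\pi(\widetilde s_{p,q})$. Let $R\subset\mathbb{H}^3$ be the set of points strictly closer to $A_{0,0}$ than to any other point of $\pi^{-1}(A)$; $s_{p,q}$ is called $R$-close to $A$ if $\widetilde s_{p,q}\subset R$. *)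

(* Defs.v *)
(* classical reals. Concrete upper half-space model of H^3. *)
From Stdlib Require Import Reals Lra ZArith.
Open Scope R_scope.

Definition Cx : Type := (R * R)%type.
Definition CR (r : R) : Cx := (r, 0).
Definition C0 : Cx := (0, 0).
Definition Cadd (u v : Cx) : Cx := (fst u + fst v, snd u + snd v).
Definition Copp (u : Cx) : Cx := (- fst u, - snd u).
Definition Csub (u v : Cx) : Cx := Cadd u (Copp v).
Definition Cmul (u v : Cx) : Cx :=
  (fst u * fst v - snd u * snd v, fst u * snd v + snd u * fst v).
Definition Cscale (r : R) (u : Cx) : Cx := (r * fst u, r * snd u).
Definition Cconj (u : Cx) : Cx := (fst u, - snd u).
Definition Cnorm2 (u : Cx) : R := fst u * fst u + snd u * snd u.
Definition Cmod (u : Cx) : R := sqrt (Cnorm2 u).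
Definition Cinv (u : Cx) : Cx := (fst u / Cnorm2 u, - snd u / Cnorm2 u).

(** 2x2 complex matrices; SL2(Cx) elements, Gamma is taken as the full
    preimage in SL2(Cx) of the subgroup of PSL2(Cx). *)
Record mat : Type := Mat { m11 : Cx; m12 : Cx; m21 : Cx; m22 : Cx }.
Definition mI : mat := Mat (CR 1) C0 C0 (CR 1).
Definition mneg (g : mat) : mat :=
  Mat (Copp (m11 g)) (Copp (m12 g)) (Copp (m21 g)) (Copp (m22 g)).
Definition mmul (g k : mat) : mat :=
  Mat (Cadd (Cmul (m11 g) (m11 k)) (Cmul (m12 g) (m21 k)))
      (Cadd (Cmul (m11 g) (m12 k)) (Cmul (m12 g) (m22 k)))
      (Cadd (Cmul (m21 g) (m11 k)) (Cmul (m22 g) (m21 k)))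
      (Cadd (Cmul (m21 g) (m12 k)) (Cmul (m22 g) (m22 k))).
Definition mdet (g : mat) : Cx :=
  Csub (Cmul (m11 g) (m22 g)) (Cmul (m12 g) (m21 g)).
(** inverse of a determinant-one matrix *)
Definition minv (g : mat) : mat :=
  Mat (m22 g) (Copp (m12 g)) (Copp (m21 g)) (m11 g).
Fixpoint mpow (g : mat) (n : nat) : mat :=
  match n with O => mI | S k => mmul g (mpow g k) end.
Definition mpowZ (g : mat) (z : Z) : mat :=
  match z with
  | Z0 => mI
  | Zpos n => mpow g (Pos.to_nat n)
  | Zneg n => mpow (minv g) (Pos.to_nat n)
  end.
Definition mdist2 (g k : mat) : R :=
  Cnorm2 (Csub (m11 g) (m11 k)) + Cnorm2 (Csub (m12 g) (m12 k))
  + Cnorm2 (Csub (m21 g) (m21 k)) + Cnorm2 (Csub (m22 g) (m22 k)).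

Record pt : Type := mkpt { pz : Cx; ph : R }.
Definition inH3 (P : pt) : Prop := 0 < ph P.

(** Poincare extension of the Moebius action of g to H^3. *)
Definition act (g : mat) (P : pt) : pt :=
  let a := m11 g in let b := m12 g in let c := m21 g in let d := m22 g in
  let z := pz P in let h := ph P in
  let czd := Cadd (Cmul c z) d in
  let den := Cnorm2 czd + Cnorm2 c * (h * h) in
  mkpt (Cscale (/ den)
          (Cadd (Cmul (Cadd (Cmul a z) b) (Cconj czd))
                (Cscale (h * h) (Cmul a (Cconj c)))))
       (h / den).

Definition fixedpt (g : mat) (z : Cx) : Prop :=
  Cadd (Cmul (m21 g) z) (m22 g) <> C0 /\
  Cadd (Cmul (m11 g) z) (m12 g) = Cmul z (Cadd (Cmul (m21 g) z) (m22 g)).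

Definition arcosh (x : R) : R := ln (x + sqrt (x * x - 1)).
Definition hdist (P Q : pt) : R :=
  arcosh (1 + (Cnorm2 (Csub (pz P) (pz Q)) + (ph P - ph Q) * (ph P - ph Q))
              / (2 * ph P * ph Q)).

(** Closed geodesic segment [P,Q] in H^3. *)
Definition hseg (P Q X : pt) : Prop :=
  inH3 X /\ hdist P X + hdist X Q = hdist P Q.

(** The geodesic with endpoints zm, zp in Cx: the Euclidean semicircle
    orthogonal to Cx from zm to zp. *)
Definition on_geod (zm zp : Cx) (X : pt) : Prop :=
  exists t : R, 0 < t < 1 /\
    pz X = Cadd zm (Cscale t (Csub zp zm)) /\
    ph X * ph X = t * (1 - t) * Cnorm2 (Csub zp zm) /\ 0 < ph X.

(** Horospheres: H_inf = {h = 1}, H_0 = centred at 0 of Euclidean diameter 1. *)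
Definition Hinf (X : pt) : Prop := ph X = 1.
Definition H0 (X : pt) : Prop :=
  0 < ph X /\ Cnorm2 (pz X) + (ph X - /2) * (ph X - /2) = /4.

Definition is_group (Gam : mat -> Prop) : Prop :=
  Gam mI /\
  (forall g, Gam g -> mdet g = CR 1) /\
  (forall g k, Gam g -> Gam k -> Gam (mmul g k)) /\
  (forall g, Gam g -> Gam (minv g)) /\
  (forall g, Gam g -> Gam (mneg g)).
Definition discrete (Gam : mat -> Prop) : Prop :=
  exists eps, 0 < eps /\ forall g, Gam g -> mdist2 g mI < eps -> g = mI.
Definition torsion_free (Gam : mat -> Prop) : Prop :=
  forall g n, Gam g -> (1 <= n)%nat ->
    (mpow g n = mI \/ mpow g n = mneg mI) -> g = mI \/ g = mneg mI.

Definition transl (t : Cx) : mat := Mat (CR 1) t C0 (CR 1).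

(** Orbit pi^{-1}(A) of the bumping point A_{0,0} = (0,1), and the region R. *)
Definition A00 : pt := mkpt C0 1.
Definition liftA (Gam : mat -> Prop) (Y : pt) : Prop :=
  exists k, Gam k /\ Y = act k A00.
Definition regionR (Gam : mat -> Prop) (X : pt) : Prop :=
  inH3 X /\ forall Y, liftA Gam Y -> Y <> A00 -> hdist X A00 < hdist X Y.

(* Main.v *)
Require Import Defs.
From Stdlib Require Import Reals ZArith Lra Lia Psatz Nsatz Classical.
Open Scope R_scope.

Ltac cunf := unfold Cadd, Csub, Copp, Cmul, Cscale, Cconj, Cnorm2, Cinv, CR, C0 in *; simpl in *.

Lemma Cx_eq (u v : Cx) : fst u = fst v -> snd u = snd v -> u = v.
Proof. destruct u, v; simpl; intros; subst; reflexivity. Qed.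

Ltac ceq := apply Cx_eq; cunf.

Lemma Cnorm2_nonneg u : 0 <= Cnorm2 u.
Proof. destruct u; unfold Cnorm2; simpl; nra. Qed.

Lemma Cnorm2_eq0 u : Cnorm2 u = 0 -> u = C0.
Proof. destruct u as [a b]; unfold Cnorm2, C0; simpl; intro H.
  assert (a=0) by nra. assert (b=0) by nra. subst; auto. Qed.

Lemma Cnorm2_pos u : u <> C0 -> 0 < Cnorm2 u.
Proof. intro H. destruct (Rle_lt_or_eq_dec 0 (Cnorm2 u) (Cnorm2_nonneg u)); auto.
  exfalso; apply H, Cnorm2_eq0; auto. Qed.

Lemma Cnorm2_mul u v : Cnorm2 (Cmul u v) = Cnorm2 u * Cnorm2 v.
Proof. destruct u, v; cunf; ring. Qed.
Lemma Cnorm2_scale r u : Cnorm2 (Cscale r u) = r*r*Cnorm2 u.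
Proof. destruct u; cunf; ring. Qed.
Lemma Cnorm2_conj u : Cnorm2 (Cconj u) = Cnorm2 u.
Proof. destruct u; cunf; ring. Qed.
Lemma Cnorm2_opp u : Cnorm2 (Copp u) = Cnorm2 u.
Proof. destruct u; cunf; ring. Qed.
Lemma Cnorm2_add_le u v : Cnorm2 (Cadd u v) <= 2*Cnorm2 u + 2*Cnorm2 v.
Proof. destruct u as [a b], v as [c d]; cunf. pose proof (pow2_ge_0 (a-c)); pose proof (pow2_ge_0 (b-d)); nra. Qed.
Lemma Cnorm2_add_ge u v : Cnorm2 (Cadd u v) >= Cnorm2 v / 2 - Cnorm2 u.
Proof. destruct u as [a b], v as [c d]; cunf. pose proof (pow2_ge_0 (2*a+c)); pose proof (pow2_ge_0 (2*b+d)); nra. Qed.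
Lemma Cnorm2_sub_ge u v : Cnorm2 (Csub u v) >= Cnorm2 u / 2 - Cnorm2 v.
Proof. destruct u as [a b], v as [c d]; cunf. pose proof (pow2_ge_0 (a-2*c)); pose proof (pow2_ge_0 (b-2*d)); nra. Qed.
Lemma Cnorm2_sub_le u v : Cnorm2 (Csub u v) <= 2*Cnorm2 u + 2*Cnorm2 v.
Proof. destruct u as [a b], v as [c d]; cunf. pose proof (pow2_ge_0 (a+c)); pose proof (pow2_ge_0 (b+d)); nra. Qed.

Lemma Cmul_eq0 u v : Cmul u v = C0 -> u = C0 \/ v = C0.
Proof. intro H. assert (Cnorm2 u * Cnorm2 v = 0).
  { rewrite <- Cnorm2_mul, H; cunf; ring. }
  destruct (Rmult_integral _ _ H0); [left|right]; apply Cnorm2_eq0; auto. Qed.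

Lemma Ceq_dec (u v : Cx) : {u = v} + {u <> v}.
Proof. destruct u as [a b], v as [c d].
  destruct (Req_dec_T a c); destruct (Req_dec_T b d); subst; auto;
  right; intro H; inversion H; auto. Qed.

Lemma Cmod_lt u v : Cmod u < Cmod v -> Cnorm2 u < Cnorm2 v.
Proof. unfold Cmod; intro H. apply sqrt_lt_0_alt in H; auto. Qed.
Lemma Cmod_lt' u v : Cnorm2 u < Cnorm2 v -> Cmod u < Cmod v.
Proof. unfold Cmod; intro H. apply sqrt_lt_1_alt; split; auto. apply Cnorm2_nonneg. Qed.

Lemma mat_eq (g k : mat) : m11 g = m11 k -> m12 g = m12 k -> m21 g = m21 k -> m22 g = m22 k -> g = k.
Proof. destruct g, k; simpl; intros; subst; auto. Qed.

Ltac meq := apply mat_eq; simpl; ceq; try (split; ring); try ring.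

Definition GB (c B : Cx) : mat := Mat (Cmul c B) (Copp (Cinv c)) c C0.

Lemma mmul_transl u v : mmul (transl u) (transl v) = transl (Cadd u v).
Proof. destruct u, v; unfold transl; apply mat_eq; simpl; ceq; ring. Qed.

Lemma mpow_transl t n : mpow (transl t) n = transl (Cscale (INR n) t).
Proof. induction n.
  - destruct t; unfold transl, mI; simpl; apply mat_eq; simpl; ceq; ring.
  - simpl mpow. rewrite IHn, mmul_transl. f_equal. rewrite S_INR. destruct t; ceq; ring. Qed.

Lemma minv_transl t : minv (transl t) = transl (Copp t).
Proof. destruct t; unfold transl, minv; apply mat_eq; simpl; ceq; ring. Qed.

Lemma mpowZ_transl t p : mpowZ (transl t) p = transl (Cscale (IZR p) t).
Proof. destruct p; simpl.
  - destruct t; unfold transl, mI; apply mat_eq; simpl; ceq; ring.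
  - rewrite mpow_transl. f_equal. rewrite INR_IPR. reflexivity.
  - rewrite minv_transl, mpow_transl. apply f_equal. rewrite INR_IPR. destruct t; ceq; unfold IZR; ring.
Qed.

Lemma mmul_transl_GB w c B : c <> C0 -> mmul (transl w) (GB c B) = GB c (Cadd B w).
Proof. intro Hc. destruct w, c, B; unfold transl, GB; apply mat_eq; simpl; ceq; ring. Qed.

Lemma act_mneg k P : act (mneg k) P = act k P.
Proof. destruct k as [a b c d], P as [z h].
  unfold act, mneg; simpl.
  assert (E1: Cnorm2 (Cadd (Cmul (Copp c) z) (Copp d)) = Cnorm2 (Cadd (Cmul c z) d)).
  { destruct c, z, d; cunf; ring. }
  assert (E2: Cnorm2 (Copp c) = Cnorm2 c) by apply Cnorm2_opp.
  rewrite E1, E2. f_equal. f_equal.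
  destruct a, b, c, d, z; ceq; ring. Qed.

Lemma mmul_assoc a b c : mmul (mmul a b) c = mmul a (mmul b c).
Proof. destruct a as [[? ?] [? ?] [? ?] [? ?]], b as [[? ?] [? ?] [? ?] [? ?]], c as [[? ?] [? ?] [? ?] [? ?]].
  apply mat_eq; simpl; ceq; ring. Qed.

Lemma mmul_minv_cancel k g : mdet g = CR 1 -> mmul (mmul k (minv g)) g = k.
Proof. destruct k as [[? ?] [? ?] [? ?] [? ?]], g as [[? ?] [? ?] [? ?] [? ?]].
  unfold mdet, minv; simpl; cunf. intro H. inversion H.
  apply mat_eq; simpl; ceq; nsatz. Qed.


Lemma pt_eq (P Q : pt) : pz P = pz Q -> ph P = ph Q -> P = Q.
Proof. destruct P, Q; simpl; intros; subst; auto. Qed.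

Lemma act_ph k P : ph (act k P) = ph P / (Cnorm2 (Cadd (Cmul (m21 k) (pz P)) (m22 k)) + Cnorm2 (m21 k) * (ph P * ph P)).
Proof. reflexivity. Qed.

Lemma act_pz k P : pz (act k P) = Cscale (/ (Cnorm2 (Cadd (Cmul (m21 k) (pz P)) (m22 k)) + Cnorm2 (m21 k) * (ph P * ph P)))
  (Cadd (Cmul (Cadd (Cmul (m11 k) (pz P)) (m12 k)) (Cconj (Cadd (Cmul (m21 k) (pz P)) (m22 k))))
        (Cscale (ph P * ph P) (Cmul (m11 k) (Cconj (m21 k))))).
Proof. reflexivity. Qed.

Lemma act_transl w P : act (transl w) P = mkpt (Cadd (pz P) w) (ph P).
Proof. destruct P as [z h]. unfold transl.
  assert (D: Cnorm2 (Cadd (Cmul C0 z) (CR 1)) + Cnorm2 C0 * (h*h) = 1) by (destruct z; cunf; ring).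
  apply pt_eq.
  - rewrite act_pz; simpl. rewrite D. destruct z, w; ceq; field.
  - rewrite act_ph; simpl. rewrite D. field.
Qed.

Lemma Cinv_unit c : Cnorm2 c = 1 -> Cinv c = Cconj c.
Proof. intro H. unfold Cinv; rewrite H. destruct c; ceq; field. Qed.

Lemma act_GB_A00 c B : Cnorm2 c = 1 -> act (GB c B) A00 = mkpt B 1.
Proof. intro Hc. unfold GB, A00. rewrite (Cinv_unit c Hc).
  assert (D: Cnorm2 (Cadd (Cmul c C0) C0) + Cnorm2 c * (1*1) = 1).
  { rewrite Hc. destruct c; cunf; ring. }
  apply pt_eq.
  - rewrite act_pz; simpl. rewrite D, Rinv_1. destruct c as [c1 c2], B; cunf.
    apply Cx_eq; simpl; nsatz.
  - rewrite act_ph; simpl. rewrite D. field.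
Qed.

Lemma inv_lin D V W b : 0 < D -> V = W + D*b -> /D*V + - b = /D*W.
Proof. intros. subst. field. lra. Qed.

Lemma act_GB_pz c B z h : Cnorm2 c = 1 -> 0 < h ->
  Cnorm2 (Csub (pz (act (GB c B) (mkpt z h))) B) * (Cnorm2 z + h*h) * (Cnorm2 z + h*h) = Cnorm2 z.
Proof. intros Hc Hh. unfold GB. rewrite act_pz. cbn [pz ph m11 m12 m21 m22]. rewrite (Cinv_unit c Hc).
  assert (D: Cnorm2 (Cadd (Cmul c z) C0) + Cnorm2 c * (h*h) = Cnorm2 z + h*h).
  { clear Hh. destruct c, z; cunf. nsatz. }
  rewrite D.
  assert (Dp: 0 < Cnorm2 z + h*h) by (pose proof (Cnorm2_nonneg z); nra).
  set (D' := Cnorm2 z + h*h) in *.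
  assert (E: Csub (Cscale (/D') (Cadd (Cmul (Cadd (Cmul (Cmul c B) z) (Copp (Cconj c))) (Cconj (Cadd (Cmul c z) C0)))
            (Cscale (h*h) (Cmul (Cmul c B) (Cconj c))))) B
         = Cscale (/D') (Copp (Cmul (Cmul (Cconj c) (Cconj c)) (Cconj z)))).
  { unfold D' in *. destruct c as [c1 c2], B as [b1 b2], z as [z1 z2]. cunf.
    apply Cx_eq; simpl; (apply inv_lin; [lra| clear -Hc; nsatz]). }
  rewrite E, Cnorm2_scale, Cnorm2_opp, !Cnorm2_mul, !Cnorm2_conj, Hc. field. lra.
Qed.


Lemma norm21 (Gam : mat -> Prop)
  (Hemb : forall k X, Gam k -> 1 < ph X -> 1 < ph (act k X) -> m21 k = C0)
  k : Gam k -> m21 k <> C0 -> 1 <= Cnorm2 (m21 k).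
Proof.
  intros Hk Hn. destruct (Rle_or_lt 1 (Cnorm2 (m21 k))) as [|Hlt]; auto. exfalso.
  assert (HN: 0 < Cnorm2 (m21 k)) by (apply Cnorm2_pos; auto).
  set (N := Cnorm2 (m21 k)) in *.
  set (H := (1 + /N)/2).
  assert (Hi: 1 < /N). { rewrite <- Rinv_1. apply Rinv_lt_contravar; lra. }
  assert (H1: 1 < H) by (unfold H; lra).
  apply Hn. apply (Hemb k (mkpt (Copp (Cmul (m22 k) (Cinv (m21 k)))) H) Hk); [cbn [ph]; exact H1|].
  rewrite act_ph. cbn [pz ph].
  assert (E: Cadd (Cmul (m21 k) (Copp (Cmul (m22 k) (Cinv (m21 k))))) (m22 k) = C0).
  { destruct k as [a b [g1 g2] [d1 d2]]; simpl in *. unfold N in HN. cunf. unfold Cnorm2; simpl. apply Cx_eq; simpl; field; lra. }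
  rewrite E. fold N. replace (Cnorm2 C0) with 0 by (cunf; ring).
  replace (H / (0 + N * (H*H))) with (/(N*H)) by (field; split; lra).
  assert (NH: N*H = (N+1)/2) by (unfold H; field; lra).
  rewrite NH. rewrite <- Rinv_1 at 1. apply Rinv_lt_contravar; lra.
Qed.

Lemma lattice (ta tb : Cx)
  (Hind : forall r s : R, Cadd (Cscale r ta) (Cscale s tb) = C0 -> r = 0 /\ s = 0) :
  exists lam, 0 < lam /\ forall r s, Cnorm2 (Cadd (Cscale r ta) (Cscale s tb)) >= lam*(r*r+s*s).
Proof.
  destruct ta as [a1 a2], tb as [b1 b2].
  set (D := a1*b2 - a2*b1).
  assert (HD: D <> 0).
  { intro HD. unfold D in HD.
    destruct (Req_dec b2 0), (Req_dec a2 0).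
    - destruct (Req_dec b1 0), (Req_dec a1 0).
      + subst. destruct (Hind 1 0) as [Hr _]; [ceq; ring| lra].
      + destruct (Hind b1 (-a1)) as [_ Hr]; [ceq; nra| lra].
      + destruct (Hind b1 (-a1)) as [Hr _]; [ceq; nra| lra].
      + destruct (Hind b1 (-a1)) as [Hr _]; [ceq; nra| lra].
    - destruct (Hind b2 (-a2)) as [_ Hr]; [ceq; nra| lra].
    - destruct (Hind b2 (-a2)) as [Hr _]; [ceq; nra| lra].
    - destruct (Hind b2 (-a2)) as [Hr _]; [ceq; nra| lra]. }
  set (S := a1*a1+a2*a2+b1*b1+b2*b2).
  assert (HS: 0 < S).
  { unfold S. destruct (Req_dec a1 0); [destruct (Req_dec b2 0)|]; [ unfold D in HD; subst; nra | nra | nra]. }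
  exists (D*D/S). split. { apply Rdiv_lt_0_compat; auto. nra. }
  intros r s. cunf.
  assert (K: ((a1*r+b1*s)*(a1*r+b1*s) + (a2*r+b2*s)*(a2*r+b2*s))*S - D*D*(r*r+s*s) >= 0).
  { unfold S, D.
    match goal with |- ?e >= 0 => replace e with (((a1*a1+a2*a2)*r + (a1*b1+a2*b2)*s)^2 + ((a1*b1+a2*b2)*r + (b1*b1+b2*b2)*s)^2) by ring end.
    apply Rle_ge; apply Rplus_le_le_0_compat; apply pow2_ge_0. }
  apply Rle_ge. unfold Rdiv.
  replace (D * D * / S * (r * r + s * s)) with ((D*D*(r*r+s*s)) / S) by (field; lra).
  apply Rmult_le_reg_r with S; [lra|]. unfold Rdiv; rewrite Rmult_assoc, Rinv_l by lra. replace (a1 * r + b1 * s) with (r*a1 + s*b1) in K by ring.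
  replace (a2 * r + b2 * s) with (r*a2 + s*b2) in K by ring. lra.
Qed.

Lemma int_sq (p q : Z) : p <> 0%Z \/ q <> 0%Z -> IZR p * IZR p + IZR q * IZR q >= 1.
Proof.
  assert (A: forall z : Z, z <> 0%Z -> IZR z * IZR z >= 1).
  { intros z Hz. destruct (Z_lt_le_dec z 0).
    - assert (IZR z <= -1) by (apply IZR_le; lia). nra.
    - assert (1 <= IZR z) by (apply IZR_le; lia). nra. }
  intros [H|H]; pose proof (A _ H); nra.
Qed.

Lemma frac_bound (x : R) (p : Z) : 0 < x < 1 -> (x + IZR p) * (x + IZR p) >= Rmin x (1-x) * Rmin x (1-x).
Proof. intros Hx. destruct (Z_lt_le_dec p 0).
  - assert (IZR p <= -1) by (apply IZR_le; lia).
    assert (Rmin x (1-x) <= 1 - x) by apply Rmin_r. assert (0 < Rmin x (1-x)) by (apply Rmin_glb_lt; lra). nra.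
  - assert (0 <= IZR p) by (apply IZR_le; lia).
    assert (Rmin x (1-x) <= x) by apply Rmin_l. assert (0 < Rmin x (1-x)) by (apply Rmin_glb_lt; lra). nra.
Qed.

Lemma shiftR_pos x0 y0 : 0 <= x0 < 1 -> 0 <= y0 < 1 -> x0 <> 0 \/ y0 <> 0 ->
  exists m0, 0 < m0 /\ forall p q : Z, (x0 + IZR p)*(x0 + IZR p) + (y0 + IZR q)*(y0+IZR q) >= m0.
Proof. intros Hx Hy [H|H].
  - assert (0 < x0) by (destruct Hx as [Hx1 _]; destruct (Rle_lt_or_eq_dec _ _ Hx1); [auto|congruence]).
    exists (Rmin x0 (1-x0) * Rmin x0 (1-x0)). split.
    + assert (0 < Rmin x0 (1-x0)) by (apply Rmin_glb_lt; lra). nra.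
    + intros p q. pose proof (frac_bound x0 p ltac:(lra)). pose proof (Rle_0_sqr (y0 + IZR q)); unfold Rsqr in *; lra.
  - assert (0 < y0) by (destruct Hy as [Hy1 _]; destruct (Rle_lt_or_eq_dec _ _ Hy1); [auto|congruence]).
    exists (Rmin y0 (1-y0) * Rmin y0 (1-y0)). split.
    + assert (0 < Rmin y0 (1-y0)) by (apply Rmin_glb_lt; lra). nra.
    + intros p q. pose proof (frac_bound y0 q ltac:(lra)). pose proof (Rle_0_sqr (x0 + IZR p)); unfold Rsqr in *; lra.
Qed.


Lemma arcosh_ge1 a : 1 <= a -> 1 <= a + sqrt (a*a-1).
Proof. intro. pose proof (sqrt_pos (a*a-1)). lra. Qed.

Lemma arcosh_lt a b : 1 <= a < b -> arcosh a < arcosh b.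
Proof. intros [H1 H2]. unfold arcosh. apply ln_increasing.
  - pose proof (arcosh_ge1 a H1). lra.
  - assert (sqrt (a*a-1) <= sqrt (b*b-1)) by (apply sqrt_le_1_alt; nra). lra. Qed.

Lemma arcosh_nonneg a : 1 <= a -> 0 <= arcosh a.
Proof. intro H. unfold arcosh. pose proof (arcosh_ge1 a H).
  destruct (Rle_lt_or_eq_dec _ _ H0).
  - rewrite <- ln_1. left. apply ln_increasing; lra.
  - rewrite <- e, ln_1. lra. Qed.

Lemma arcosh_le_inv a b : 1 <= a -> 1 <= b -> arcosh a <= arcosh b -> a <= b.
Proof. intros Ha Hb H. destruct (Rle_or_lt a b); auto.
  pose proof (arcosh_lt b a ltac:(lra)). lra. Qed.

Lemma div_lt a b c : 0 < b -> a < c*b -> a/b < c.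
Proof. intros. apply Rmult_lt_reg_r with b; auto. unfold Rdiv. rewrite Rmult_assoc, Rinv_l; lra. Qed.
Lemma lt_div a b c : 0 < b -> c*b < a -> c < a/b.
Proof. intros. apply Rmult_lt_reg_r with b; auto. unfold Rdiv. rewrite Rmult_assoc, Rinv_l; lra. Qed.
Lemma div_le a b c : 0 < b -> a <= c*b -> a/b <= c.
Proof. intros. apply Rmult_le_reg_r with b; auto. unfold Rdiv. rewrite Rmult_assoc, Rinv_l; lra. Qed.
Lemma le_div a b c : 0 < b -> c*b <= a -> c <= a/b.
Proof. intros. apply Rmult_le_reg_r with b; auto. unfold Rdiv. rewrite Rmult_assoc, Rinv_l; lra. Qed.

Lemma qv_nonneg (P Q : pt) : 0 < ph P -> 0 < ph Q ->
  0 <= (Cnorm2 (Csub (pz P) (pz Q)) + (ph P - ph Q) * (ph P - ph Q)) / (2 * ph P * ph Q).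
Proof. intros. apply Rmult_le_pos. pose proof (Cnorm2_nonneg (Csub (pz P) (pz Q))). pose proof (Rle_0_sqr (ph P - ph Q)); unfold Rsqr in *; lra.
  left. apply Rinv_0_lt_compat. nra. Qed.

Lemma hdist_nonneg P Q : 0 < ph P -> 0 < ph Q -> 0 <= hdist P Q.
Proof. intros. unfold hdist. apply arcosh_nonneg. pose proof (qv_nonneg P Q H H0). lra. Qed.

Lemma Cnorm2_diff u v : Cnorm2 v <= 2 * Cnorm2 u + 2 * Cnorm2 (Csub u v).
Proof. destruct u as [a b], v as [c d]; cunf. pose proof (pow2_ge_0 (2*a-c)); pose proof (pow2_ge_0 (2*b-d)); nra. Qed.

Lemma mmul_mneg_l a b : mmul (mneg a) b = mneg (mmul a b).
Proof. destruct a as [[? ?] [? ?] [? ?] [? ?]], b as [[? ?] [? ?] [? ?] [? ?]].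
  apply mat_eq; simpl; ceq; ring. Qed.

Definition close (r : R) (X : pt) : Prop :=
  0 < ph X /\ (ph X - 1) * (ph X - 1) <= r /\ Cnorm2 (pz X) <= r.

Lemma orbit_cases (Gam : mat -> Prop) ta tb c b0 lam
  (Hgrp : is_group Gam)
  (Hstab : forall k, Gam k -> m21 k = C0 -> exists p q : Z,
       k = mmul (mpowZ (transl ta) p) (mpowZ (transl tb) q) \/
       k = mneg (mmul (mpowZ (transl ta) p) (mpowZ (transl tb) q)))
  (Hemb : forall k X, Gam k -> 1 < ph X -> 1 < ph (act k X) -> m21 k = C0)
  (Hc : c <> C0) (Hcn : Cnorm2 c = 1) (Hg : Gam (GB c b0))
  (Hlat : forall p q : Z, (p <> 0 \/ q <> 0)%Z -> Cnorm2 (Cadd (Cscale (IZR p) ta) (Cscale (IZR q) tb)) >= lam)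
  (Hsh : forall p q : Z, Cnorm2 (Cadd b0 (Cadd (Cscale (IZR p) ta) (Cscale (IZR q) tb))) >= lam)
  k : Gam k ->
  (exists w, (k = transl w \/ k = mneg (transl w)) /\ (w = C0 \/ Cnorm2 w >= lam)) \/
  (exists B, (k = GB c B \/ k = mneg (GB c B)) /\ Cnorm2 B >= lam) \/
  (1 <= Cnorm2 (m21 k) /\ 1 <= Cnorm2 (m22 k)).
Proof.
  intro Hk. destruct Hgrp as [HI [Hdet [Hmul [Hinv Hneg]]]].
  destruct (Ceq_dec (m21 k) C0) as [H0|Hn].
  - left. destruct (Hstab k Hk H0) as [p [q Hpq]]. rewrite !mpowZ_transl, mmul_transl in Hpq.
    exists (Cadd (Cscale (IZR p) ta) (Cscale (IZR q) tb)). split; auto.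
    destruct (Z.eq_dec p 0), (Z.eq_dec q 0).
    + left. subst. destruct ta, tb; ceq; ring.
    + right. apply Hlat; tauto.
    + right. apply Hlat; tauto.
    + right. apply Hlat; tauto.
  - right. set (k' := mmul k (minv (GB c b0))).
    assert (Hk' : Gam k') by (apply Hmul; auto).
    assert (Ek : k = mmul k' (GB c b0)) by (symmetry; apply mmul_minv_cancel; auto).
    destruct (Ceq_dec (m21 k') C0) as [H0'|Hn'].
    + left. destruct (Hstab k' Hk' H0') as [p [q Hpq]]. rewrite !mpowZ_transl, mmul_transl in Hpq.
      exists (Cadd b0 (Cadd (Cscale (IZR p) ta) (Cscale (IZR q) tb))). split; [|apply Hsh].
      rewrite Ek. destruct Hpq as [E|E]; rewrite E; [left|right];
        rewrite ?mmul_mneg_l, mmul_transl_GB; auto.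
    + right. split. { apply (norm21 Gam Hemb); auto. }
      pose proof (norm21 Gam Hemb k' Hk' Hn') as Hn2.
      unfold k' in Hn2. unfold GB, minv in Hn2. simpl in Hn2.
      replace (Cnorm2 (Cadd (Cmul (m21 k) C0) (Cmul (m22 k) (Copp c)))) with (Cnorm2 (m22 k) * Cnorm2 c) in Hn2.
      * rewrite Hcn in Hn2. lra.
      * destruct (m21 k), (m22 k), c; cunf; ring.
Qed.


Lemma close_h r X : r <= /100 -> close r X -> 9/10 <= ph X <= 11/10.
Proof. intros Hr [H0 [H1 H2]]. split; nra. Qed.

Lemma cmp_flat r lam X w : 0 < r -> r <= /100 -> 16*r <= lam -> close r X -> Cnorm2 w >= lam ->
  hdist X A00 < hdist X (mkpt w 1).
Proof. intros Hr Hr1 Hl HX Hw. pose proof (close_h r X Hr1 HX) as Hh.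
  destruct HX as [H0 [H1 H2]]. unfold hdist. cbn [pz ph A00]. apply arcosh_lt.
  assert (E: Cnorm2 (Csub (pz X) C0) = Cnorm2 (pz X)) by (destruct (pz X); cunf; ring).
  rewrite E. pose proof (Cnorm2_sub_ge w (pz X)).
  assert (Csym: Cnorm2 (Csub (pz X) w) = Cnorm2 (Csub w (pz X))) by (destruct (pz X), w; cunf; ring).
  pose proof (Cnorm2_nonneg (pz X)).
  split.
  - assert (0 <= (Cnorm2 (pz X) + (ph X - 1) * (ph X - 1)) / (2 * ph X * 1)).
    { apply Rmult_le_pos; [pose proof (Rle_0_sqr (ph X - 1)); unfold Rsqr in *; lra|left; apply Rinv_0_lt_compat; lra]. } lra.
  - apply Rplus_lt_compat_l. unfold Rdiv. apply Rmult_lt_compat_r. apply Rinv_0_lt_compat; lra.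
    rewrite Csym. lra.
Qed.

Lemma cmp_low r X Y : 0 < r -> r <= /100 -> close r X -> 0 < ph Y <= /2 ->
  hdist X A00 < hdist X Y.
Proof. intros Hr Hr1 HX HY. pose proof (close_h r X Hr1 HX) as Hh.
  destruct HX as [H0 [H1 H2]]. unfold hdist. cbn [pz ph A00]. apply arcosh_lt.
  assert (E: Cnorm2 (Csub (pz X) C0) = Cnorm2 (pz X)) by (destruct (pz X); cunf; ring).
  rewrite E. pose proof (Cnorm2_nonneg (pz X)). pose proof (Cnorm2_nonneg (Csub (pz X) (pz Y))).
  assert (A: (Cnorm2 (pz X) + (ph X - 1) * (ph X - 1)) / (2 * ph X * 1) < /10).
  { apply div_lt; nra. }
  assert (B: /10 < (Cnorm2 (Csub (pz X) (pz Y)) + (ph X - ph Y) * (ph X - ph Y)) / (2 * ph X * ph Y)).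
  { apply lt_div; nra. }
  split; [|lra].
  assert (0 <= (Cnorm2 (pz X) + (ph X - 1) * (ph X - 1)) / (2 * ph X * 1)).
  { apply Rmult_le_pos; [pose proof (Rle_0_sqr (ph X - 1)); unfold Rsqr in *; lra|left; apply Rinv_0_lt_compat; lra]. } lra.
Qed.

Lemma region (Gam : mat -> Prop) ta tb c b0 lam
  (Hgrp : is_group Gam)
  (Hstab : forall k, Gam k -> m21 k = C0 -> exists p q : Z,
       k = mmul (mpowZ (transl ta) p) (mpowZ (transl tb) q) \/
       k = mneg (mmul (mpowZ (transl ta) p) (mpowZ (transl tb) q)))
  (Hemb : forall k X, Gam k -> 1 < ph X -> 1 < ph (act k X) -> m21 k = C0)
  (Hc : c <> C0) (Hcn : Cnorm2 c = 1) (Hg : Gam (GB c b0))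
  (Hlat : forall p q : Z, (p <> 0 \/ q <> 0)%Z -> Cnorm2 (Cadd (Cscale (IZR p) ta) (Cscale (IZR q) tb)) >= lam)
  (Hsh : forall p q : Z, Cnorm2 (Cadd b0 (Cadd (Cscale (IZR p) ta) (Cscale (IZR q) tb))) >= lam)
  r X : 0 < r -> r <= /100 -> 16*r <= lam -> close r X -> regionR Gam X.
Proof.
  intros Hr Hr1 Hl HX. split; [unfold inH3; apply HX|].
  intros Y [k [Hk HY]] HYn. subst Y.
  destruct (orbit_cases Gam ta tb c b0 lam Hgrp Hstab Hemb Hc Hcn Hg Hlat Hsh k Hk)
    as [[w [Hkw Hw]]|[[B [HkB HB]]|[H1 H2]]].
  - assert (E2: act k A00 = act (transl w) A00) by (destruct Hkw; subst k; rewrite ?act_mneg; auto).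
    rewrite E2 in *. rewrite act_transl in *. cbn [pz ph A00] in *.
    destruct Hw as [->|Hw].
    + exfalso; apply HYn; apply pt_eq; cbn [pz ph A00]; [ceq; ring|auto].
    + replace (Cadd C0 w) with w by (destruct w; ceq; ring). apply (cmp_flat r lam); auto.
  - destruct HkB; subst k; rewrite ?act_mneg, act_GB_A00 in *; auto; apply (cmp_flat r lam); auto.
  - apply (cmp_low r); auto. rewrite act_ph. cbn [pz ph A00].
    replace (Cnorm2 (Cadd (Cmul (m21 k) C0) (m22 k))) with (Cnorm2 (m22 k)) by (destruct (m21 k), (m22 k); cunf; ring).
    split. { apply Rdiv_lt_0_compat; lra. } apply div_le; lra.
Qed.

Lemma embed (Gam : mat -> Prop) ta tb c b0 lam
  (Hgrp : is_group Gam)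
  (Hstab : forall k, Gam k -> m21 k = C0 -> exists p q : Z,
       k = mmul (mpowZ (transl ta) p) (mpowZ (transl tb) q) \/
       k = mneg (mmul (mpowZ (transl ta) p) (mpowZ (transl tb) q)))
  (Hemb : forall k X, Gam k -> 1 < ph X -> 1 < ph (act k X) -> m21 k = C0)
  (Hc : c <> C0) (Hcn : Cnorm2 c = 1) (Hg : Gam (GB c b0))
  (Hlat : forall p q : Z, (p <> 0 \/ q <> 0)%Z -> Cnorm2 (Cadd (Cscale (IZR p) ta) (Cscale (IZR q) tb)) >= lam)
  (Hsh : forall p q : Z, Cnorm2 (Cadd b0 (Cadd (Cscale (IZR p) ta) (Cscale (IZR q) tb))) >= lam)
  r X Y k : 0 < r -> r <= /100 -> 16*r <= lam -> close r X -> close r Y -> Gam k -> act k X = Y -> X = Y.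
Proof.
  intros Hr Hr1 Hl HX HY Hk E.
  pose proof (close_h r X Hr1 HX) as HhX. pose proof (close_h r Y Hr1 HY) as HhY.
  destruct (orbit_cases Gam ta tb c b0 lam Hgrp Hstab Hemb Hc Hcn Hg Hlat Hsh k Hk)
    as [[w [Hkw Hw]]|[[B [HkB HB]]|[H1 H2]]].
  - assert (E2: act (transl w) X = Y) by (destruct Hkw; subst k; rewrite ?act_mneg in E; auto).
    rewrite act_transl in E2. clear E. subst Y. destruct Hw as [->|Hw].
    + apply pt_eq; simpl; auto. destruct (pz X); ceq; ring.
    + exfalso. destruct HX as [_ [_ HX]], HY as [_ [_ HY]]. cbn [pz] in HY.
      pose proof (Cnorm2_add_ge (pz X) w). lra.
  - assert (E2: act (GB c B) X = Y) by (destruct HkB; subst k; rewrite ?act_mneg in E; auto).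
    exfalso. destruct X as [z h]. cbn [ph pz] in *.
    pose proof (act_GB_pz c B z h Hcn ltac:(lra)) as K. rewrite E2 in K.
    destruct HX as [_ [_ HX]], HY as [_ [_ HY]]. cbn [pz] in HX.
    pose proof (Cnorm2_nonneg z).
    assert (D: 81/100 <= Cnorm2 z + h*h) by nra.
    assert (K2: Cnorm2 (Csub (pz Y) B) <= 2*r).
    { pose proof (Cnorm2_nonneg (Csub (pz Y) B)).
      assert (Cnorm2 (Csub (pz Y) B) * (81/100*(81/100)) <= Cnorm2 (Csub (pz Y) B) * (Cnorm2 z + h*h) * (Cnorm2 z + h*h)).
      { rewrite Rmult_assoc. apply Rmult_le_compat_l; auto. nra. }
      nra. }
    pose proof (Cnorm2_diff (pz Y) B). lra.
  - exfalso. destruct X as [z h]. cbn [ph pz] in *.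
    destruct HX as [_ [_ HX]], HY as [HY0 [HY1 _]]. cbn [pz ph] in HX.
    rewrite <- E, act_ph in HY1, HY0. cbn [ph pz] in HY1, HY0.
    set (g := m21 k) in *. set (d := m22 k) in *.
    pose proof (Cnorm2_add_ge (Cmul g z) d) as A. rewrite Cnorm2_mul in A.
    set (N := Cnorm2 (Cadd (Cmul g z) d)) in *.
    assert (hh: 81/100 <= h*h) by nra.
    assert (M1: Cnorm2 g * (h*h - Cnorm2 z) >= 1*(h*h - Cnorm2 z)) by (apply Rle_ge, Rmult_le_compat_r; lra).
    assert (Den: 13/10 <= N + Cnorm2 g * (h*h)) by (unfold Rminus in M1; rewrite Rmult_plus_distr_l in M1; lra).
    assert (h / (N + Cnorm2 g * (h * h)) <= 11/13) by (apply div_le; lra).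
    set (y := h / (N + Cnorm2 g * (h * h))) in *.
    assert (y >= 9/10) by nra.
    lra.
Qed.


Lemma seg_close c B zm zp Cp Dp tC tD r :
  Cnorm2 c = 1 -> Cadd zm zp = B ->
  tC + tD = 1 ->
  pz Cp = Cadd zm (Cscale tC (Csub zp zm)) -> ph Cp = 1 ->
  pz Dp = Cadd zm (Cscale tD (Csub zp zm)) -> ph Dp = 1 ->
  Cnorm2 (pz Cp) <= r/42 -> r <= /100 -> 0 < r ->
  forall X, hseg (act (minv (GB c B)) Dp) Cp X -> close r X.
Proof.
  intros Hc HB Ht HCz HCh HDz HDh He Hr1 Hr X [HX Hseg].
  set (e := pz Cp) in *. set (eps := Cnorm2 e) in *.
  assert (Heps: 0 <= eps) by apply Cnorm2_nonneg.
  set (P := act (minv (GB c B)) Dp) in *.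
  assert (Ecz: Cadd (Cmul (Copp c) (pz Dp)) (Cmul c B) = Cmul c e).
  { rewrite HDz, HCz. rewrite <- HB.
    replace tD with (1 - tC) by lra. destruct c, zm, zp; ceq; ring. }
  assert (Den: Cnorm2 (Cadd (Cmul (Copp c) (pz Dp)) (Cmul c B)) + Cnorm2 (Copp c) * (ph Dp * ph Dp) = eps + 1).
  { rewrite Ecz, Cnorm2_mul, Cnorm2_opp, Hc, HDh. unfold eps. ring. }
  assert (HPh: ph P = / (eps + 1)).
  { unfold P. rewrite act_ph. unfold GB, minv. cbn [m21 m22 m11 m12]. rewrite Den, HDh. field. lra. }
  assert (HPz: Cnorm2 (pz P) = eps / ((eps+1)*(eps+1))).
  { unfold P. rewrite act_pz. unfold GB, minv. cbn [m21 m22 m11 m12]. rewrite Den.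
    rewrite Ecz. rewrite Cnorm2_scale.
    replace (Cadd (Cmul (Cadd (Cmul C0 (pz Dp)) (Copp (Copp (Cinv c)))) (Cconj (Cmul c e)))
          (Cscale (ph Dp * ph Dp) (Cmul C0 (Cconj (Copp c))))) with (Cmul (Cinv c) (Cconj (Cmul c e))).
    2: { generalize (Cinv c) (pz Dp) c e; intros [? ?] [? ?] [? ?] [? ?]; ceq; ring. }
    rewrite Cnorm2_mul, Cnorm2_conj, Cnorm2_mul, Cinv_unit, Cnorm2_conj, Hc by auto.
    fold eps. field. lra. }
  assert (HP0: 0 < ph P) by (rewrite HPh; apply Rinv_0_lt_compat; lra).
  assert (eps <= /4200) by lra.
  assert (QP: (Cnorm2 (Csub (pz P) (pz Cp)) + (ph P - ph Cp) * (ph P - ph Cp)) / (2 * ph P * ph Cp) <= 5 * eps).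
  { rewrite HCh. fold e. pose proof (Cnorm2_sub_le (pz P) e) as S1. fold eps in S1.
    assert (A1: Cnorm2 (pz P) <= eps).
    { rewrite HPz. apply div_le; nra. }
    assert (A2: (ph P - 1) * (ph P - 1) <= eps).
    { rewrite HPh. replace (/(eps+1) - 1) with (- eps / (eps+1)) by (field; lra).
      assert (0 <= eps/(eps+1) <= eps).
      { split. apply Rmult_le_pos; [lra| left; apply Rinv_0_lt_compat; lra]. apply div_le; nra. }
      replace (- eps / (eps+1)) with (- (eps/(eps+1))) by (field; lra). nra. }
    assert (A3: 1 <= 2 * ph P) by (rewrite HPh; apply le_div; lra).
    apply div_le; [lra|]. nra. }
  assert (HXp: 0 < ph X) by exact HX.
  assert (Hd1: 0 <= hdist P X) by (apply hdist_nonneg; auto).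
  assert (Hd2: hdist X Cp <= hdist P Cp) by lra.
  unfold hdist in Hd2. apply arcosh_le_inv in Hd2.
  2: { pose proof (qv_nonneg X Cp HXp ltac:(lra)). lra. }
  2: { pose proof (qv_nonneg P Cp HP0 ltac:(lra)). lra. }
  assert (QX: (Cnorm2 (Csub (pz X) e) + (ph X - 1) * (ph X - 1)) / (2 * ph X * 1) <= 5*eps).
  { rewrite HCh in Hd2, QP. change (pz Cp) with e in Hd2, QP. lra. }
  assert (QX2: Cnorm2 (Csub (pz X) e) + (ph X - 1) * (ph X - 1) <= 10*eps*ph X).
  { apply Rmult_le_reg_r with (/ (2 * ph X * 1)). apply Rinv_0_lt_compat; lra.
    replace (10 * eps * ph X * / (2 * ph X * 1)) with (5*eps) by (field; lra). exact QX. }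
  pose proof (Cnorm2_nonneg (Csub (pz X) e)).
  assert (Hh2: ph X <= 2).
  { destruct (Rle_or_lt (ph X) 2); auto. exfalso.
    assert ((ph X - 1)*(ph X - 1) >= ph X * ph X / 4) by nra. nra. }
  assert (T1: 10*eps*ph X <= 20*eps) by nra.
  pose proof (Rle_0_sqr (ph X - 1)) as T2. unfold Rsqr in T2.
  split; [auto|split].
  - lra.
  - pose proof (Cnorm2_diff e (pz X)) as K.
    replace (Csub e (pz X)) with (Copp (Csub (pz X) e)) in K by (generalize e (pz X); intros [? ?] [? ?]; ceq; ring).
    rewrite Cnorm2_opp in K. change (Cnorm2 e) with eps in K. lra.
Qed.


Definition quad (B u z : Cx) : Cx := Cadd (Csub (Cmul z z) (Cmul B z)) u.
Definition uc (c : Cx) : Cx := Cmul (Cconj c) (Cconj c).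

Lemma fix_eq c B z : Cnorm2 c = 1 -> fixedpt (GB c B) z -> z <> C0 /\ quad B (uc c) z = C0.
Proof. intros Hc [H1 H2]. unfold GB in *; cbn [m11 m12 m21 m22] in *. split.
  - intro Hz; apply H1; subst; destruct c; ceq; ring.
  - rewrite (Cinv_unit c Hc) in H2. clear H1. unfold quad, uc.
    destruct c as [c1 c2], B as [b1 b2], z as [z1 z2]. cunf. injection H2 as ? ?. ceq; nsatz.
Qed.

Lemma fix_intro c B z : Cnorm2 c = 1 -> z <> C0 -> quad B (uc c) z = C0 -> fixedpt (GB c B) z.
Proof. intros Hc Hz Hq. unfold fixedpt, GB; cbn [m11 m12 m21 m22]. split.
  - intro H. assert (Cmul c z = C0) by (rewrite <- H; destruct c, z; ceq; ring).
    destruct (Cmul_eq0 _ _ H0) as [->|]; auto. cunf; lra.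
  - rewrite (Cinv_unit c Hc). unfold quad, uc in Hq.
    destruct c as [c1 c2], B as [b1 b2], z as [z1 z2]. cunf. injection Hq as ? ?. clear Hz. ceq; nsatz.
Qed.

Lemma roots_rel B u zm zp : quad B u zm = C0 -> quad B u zp = C0 -> zm <> zp ->
  Cadd zm zp = B /\ Cmul zm zp = u.
Proof. intros H1 H2 Hn.
  assert (E: Cmul (Csub zm zp) (Csub (Cadd zm zp) B) = C0).
  { unfold quad in *. destruct B as [b1 b2], u as [u1 u2], zm as [m1 m2], zp as [p1 p2].
    cunf. injection H1 as ? ?. injection H2 as ? ?. ceq; nsatz. }
  destruct (Cmul_eq0 _ _ E) as [E1|E1].
  - exfalso; apply Hn. destruct zm, zp; cunf. inversion E1. f_equal; lra.
  - assert (SB: Cadd zm zp = B) by (destruct zm, zp, B; cunf; inversion E1; f_equal; lra).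
    split; auto. subst B. unfold quad in H1.
    destruct u as [u1 u2], zm as [m1 m2], zp as [p1 p2]. clear Hn E E1 H2. cunf. injection H1 as ? ?. ceq; nsatz.
Qed.

Lemma roots_uniq B u zm zp z : Cadd zm zp = B -> Cmul zm zp = u -> quad B u z = C0 -> z = zm \/ z = zp.
Proof. intros HB Hu Hq.
  assert (E: Cmul (Csub z zm) (Csub z zp) = C0).
  { subst. unfold quad in Hq. destruct z as [a b], zm as [m1 m2], zp as [p1 p2]. cunf.
    injection Hq as ? ?. ceq; nsatz. }
  destruct (Cmul_eq0 _ _ E) as [E1|E1]; [left|right];
  destruct z, zm, zp; cunf; inversion E1; f_equal; lra.
Qed.

Lemma Csqrt_ex w : exists s, Cmul s s = w.
Proof. destruct w as [a b]. set (m := sqrt (a*a+b*b)).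
  assert (Hm: m*m = a*a+b*b) by (apply sqrt_sqrt; nra).
  assert (Hm0: 0 <= m) by apply sqrt_pos.
  assert (Ha: a <= m /\ -a <= m) by (split; nra).
  set (s1 := sqrt ((m+a)/2)). set (s2 := sqrt ((m-a)/2)).
  assert (E1: s1*s1 = (m+a)/2) by (apply sqrt_sqrt; lra).
  assert (E2: s2*s2 = (m-a)/2) by (apply sqrt_sqrt; lra).
  assert (P: (s1*s2)*(s1*s2) = (b/2)*(b/2)).
  { replace ((s1*s2)*(s1*s2)) with ((s1*s1)*(s2*s2)) by ring. rewrite E1, E2. nra. }
  assert (P0: 0 <= s1*s2) by (apply Rmult_le_pos; apply sqrt_pos).
  destruct (Rle_or_lt 0 b).
  - assert (s1*s2 = b/2). { apply Rsqr_inj; unfold Rsqr; lra. }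
    exists (s1, s2). ceq; nra.
  - assert (s1*s2 = -(b/2)). { apply Rsqr_inj; unfold Rsqr; lra. }
    exists (s1, -s2). ceq; nra.
Qed.

Lemma eps_bound c B zm zp t :
  Cnorm2 c = 1 -> Cadd zm zp = B -> Cmul zm zp = uc c -> Cnorm2 zm < Cnorm2 zp ->
  0 < t -> t <= /2 -> t * (1 - t) * Cnorm2 (Csub zp zm) = 1 -> 32 <= Cnorm2 B ->
  Cnorm2 (Cadd zm (Cscale t (Csub zp zm))) * Cnorm2 B <= 136.
Proof. intros Hc HB Hu Hlt Ht0 Ht1 Ht HBb.
  assert (Hnm: Cnorm2 zm * Cnorm2 zp = 1).
  { rewrite <- Cnorm2_mul, Hu. unfold uc. rewrite Cnorm2_mul, Cnorm2_conj, Hc. ring. }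
  pose proof (Cnorm2_add_le zm zp) as A1. rewrite HB in A1.
  pose proof (Cnorm2_sub_ge zp zm) as A2.
  pose proof (Cnorm2_add_le zm (Cscale t (Csub zp zm))) as A3. rewrite Cnorm2_scale in A3.
  set (nm := Cnorm2 zm) in *. set (np := Cnorm2 zp) in *. set (L := Cnorm2 (Csub zp zm)) in *.
  set (b := Cnorm2 B) in *.
  assert (nm0: 0 <= nm) by apply Cnorm2_nonneg.
  assert (nm1: nm < 1).
  { destruct (Rlt_or_le nm 1); auto. assert (nm*np >= 1*np) by (apply Rle_ge, Rmult_le_compat_r; lra). lra. }
  assert (npb: b <= 4*np) by nra.
  assert (nmb: nm * b <= 4) by nra.
  assert (Lb: b <= 16*L) by nra.
  assert (tL: t * L <= 2) by nra.
  assert (L0: 0 <= L) by apply Cnorm2_nonneg.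
  assert (tL0: 0 <= t*L) by nra.
  assert (t2L1: t*t*L*b <= t*t*L*(16*L)) by (apply Rmult_le_compat_l; nra).
  assert (t2L: t*t*L*b <= 64) by nra.
  assert (b0: 0 <= b) by lra.
  assert (A4: Cnorm2 (Cadd zm (Cscale t (Csub zp zm))) * b <= (2*nm + 2*(t*t*L))*b) by (apply Rmult_le_compat_r; lra).
  nra.
Qed.


Lemma on_geod_inf zm zp X : on_geod zm zp X -> Hinf X ->
  exists t, 0 < t < 1 /\ pz X = Cadd zm (Cscale t (Csub zp zm)) /\ t*(1-t)*Cnorm2 (Csub zp zm) = 1.
Proof. intros [t [Ht [Hz [Hh _]]]] Hi. unfold Hinf in Hi. rewrite Hi in Hh.
  exists t; repeat split; try lra; auto. Qed.

Lemma inter_exist zm zp : 4 < Cnorm2 (Csub zp zm) ->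
  exists Cp Dp : pt,
    on_geod zm zp Cp /\ Hinf Cp /\ on_geod zm zp Dp /\ Hinf Dp /\ Cp <> Dp /\
    (forall X, on_geod zm zp X -> Hinf X -> X = Cp \/ X = Dp).
Proof. intros HL. set (L := Cnorm2 (Csub zp zm)) in *.
  set (d := sqrt (1 - 4/L)).
  assert (Hq: 0 < 4/L < 1) by (split; [apply Rdiv_lt_0_compat; lra| apply div_lt; lra]).
  assert (Hd2: d*d = 1 - 4/L) by (apply sqrt_sqrt; lra).
  assert (Hd0: 0 < d) by (apply sqrt_lt_R0; lra).
  assert (Hd1: d < 1) by nra.
  set (t1 := (1-d)/2). set (t2 := (1+d)/2).
  assert (E1: t1*(1-t1)*L = 1).
  { unfold t1. replace ((1-d)/2*(1-(1-d)/2)*L) with ((1 - d*d)/4*L) by field. rewrite Hd2. field. lra. }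
  assert (E2: t2*(1-t2)*L = 1).
  { unfold t2. replace ((1+d)/2*(1-(1+d)/2)*L) with ((1 - d*d)/4*L) by field. rewrite Hd2. field. lra. }
  exists (mkpt (Cadd zm (Cscale t1 (Csub zp zm))) 1), (mkpt (Cadd zm (Cscale t2 (Csub zp zm))) 1).
  repeat split.
  - exists t1. cbn [pz ph]. repeat split; unfold t1; try lra. fold t1. fold L. lra.
  - exists t2. cbn [pz ph]. repeat split; unfold t2; try lra. fold t2. fold L. lra.
  - intro H. apply (f_equal pz) in H. cbn [pz] in H.
    assert (K: forall r, Csub (Cadd zm (Cscale r (Csub zp zm))) zm = Cscale r (Csub zp zm))
      by (intros; generalize (Csub zp zm); intros [? ?]; destruct zm; ceq; ring).
    apply (f_equal (fun u => Cnorm2 (Csub u zm))) in H. rewrite !K, !Cnorm2_scale in H. fold L in H.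
    unfold t1, t2 in H. nra.
  - intros X HX Hi. destruct (on_geod_inf zm zp X HX Hi) as [t [Ht [Hz Hl]]]. fold L in Hl.
    assert ((t - t1)*(t - t2) = 0).
    { unfold t1, t2. replace ((t - (1-d)/2)*(t-(1+d)/2)) with (t*t - t + (1 - d*d)/4) by field.
      rewrite Hd2. apply Rmult_eq_reg_r with L; [|lra]. field_simplify; try lra. }
    destruct (Rmult_integral _ _ H) as [H1|H1]; [left|right]; apply pt_eq; cbn [pz ph];
      try (rewrite Hz; f_equal; f_equal; lra); apply Hi.
Qed.

Lemma inter_order zm zp Cp Dp :
  on_geod zm zp Cp -> Hinf Cp -> on_geod zm zp Dp -> Hinf Dp ->
  Cmod (Csub (pz Cp) zm) < Cmod (Csub (pz Dp) zm) ->
  exists tC tD, 0 < tC /\ tC <= /2 /\ tC + tD = 1 /\ tC*(1-tC)*Cnorm2 (Csub zp zm) = 1 /\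
    pz Cp = Cadd zm (Cscale tC (Csub zp zm)) /\ pz Dp = Cadd zm (Cscale tD (Csub zp zm)).
Proof. intros HC HCi HD HDi Hlt.
  destruct (on_geod_inf _ _ _ HC HCi) as [tC [HtC [HCz HCl]]].
  destruct (on_geod_inf _ _ _ HD HDi) as [tD [HtD [HDz HDl]]].
  exists tC, tD. apply Cmod_lt in Hlt. rewrite HCz, HDz in Hlt.
  assert (K: forall r, Csub (Cadd zm (Cscale r (Csub zp zm))) zm = Cscale r (Csub zp zm))
      by (intros; generalize (Csub zp zm); intros [? ?]; destruct zm; ceq; ring).
  rewrite !K, !Cnorm2_scale in Hlt.
  set (L := Cnorm2 (Csub zp zm)) in *.
  assert (L0: 0 < L).
  { destruct (Rle_or_lt L 0) as [h|h]; auto. exfalso. assert (P0: 0 < tC*(1-tC)) by nra.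
    pose proof (Rmult_le_compat_l (tC*(1-tC)) L 0 ltac:(lra) h). lra. }
  assert (tC*tC < tD*tD) by (apply Rmult_lt_reg_r with L; auto).
  assert (tC < tD) by nra.
  assert (S: (tC - tD)*(1 - tC - tD) = 0).
  { apply Rmult_eq_reg_r with L; [|lra]. nra. }
  destruct (Rmult_integral _ _ S); [lra|].
  repeat split; auto; lra.
Qed.


Lemma uc_norm c : Cnorm2 c = 1 -> Cnorm2 (uc c) = 1.
Proof. intro H. unfold uc. rewrite Cnorm2_mul, Cnorm2_conj, H. ring. Qed.

Lemma root_sep c B zm zp : Cnorm2 c = 1 -> Cadd zm zp = B -> Cmul zm zp = uc c ->
  Cnorm2 zm < Cnorm2 zp -> 64 <= Cnorm2 B -> 4 < Cnorm2 (Csub zp zm).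
Proof. intros Hc HB Hu Hlt Hb.
  assert (Hnm: Cnorm2 zm * Cnorm2 zp = 1) by (rewrite <- Cnorm2_mul, Hu; apply uc_norm; auto).
  pose proof (Cnorm2_add_le zm zp) as A1. rewrite HB in A1.
  pose proof (Cnorm2_sub_ge zp zm) as A2.
  pose proof (Cnorm2_nonneg zm).
  assert (nm1: Cnorm2 zm < 1).
  { destruct (Rlt_or_le (Cnorm2 zm) 1); auto.
    assert (Cnorm2 zm * Cnorm2 zp >= 1 * Cnorm2 zp) by (apply Rle_ge, Rmult_le_compat_r; lra). lra. }
  lra.
Qed.

Lemma two_roots c B : Cnorm2 c = 1 -> 64 <= Cnorm2 B ->
  exists zm zp, quad B (uc c) zm = C0 /\ quad B (uc c) zp = C0 /\ Cadd zm zp = B /\ Cmul zm zp = uc c /\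
    Cnorm2 zm < Cnorm2 zp.
Proof. intros Hc Hb.
  destruct (Csqrt_ex (Csub (Cmul B B) (Cscale 4 (uc c)))) as [s Hs].
  set (z1 := Cscale (/2) (Cadd B s)). set (z2 := Cscale (/2) (Csub B s)).
  assert (S: Cadd z1 z2 = B) by (unfold z1, z2; destruct B, s; ceq; field).
  assert (P: Cmul z1 z2 = uc c).
  { unfold z1, z2. generalize (uc c) Hs. intros [u1 u2] H. destruct B as [b1 b2], s as [s1 s2].
    cunf. injection H as H H'. ceq.
    - replace u1 with ((b1*b1 - b2*b2 - (s1*s1 - s2*s2))/4) by lra. field.
    - replace u2 with ((b1*b2 + b2*b1 - (s1*s2 + s2*s1))/4) by lra. field. }
  assert (Q1: quad B (uc c) z1 = C0).
  { rewrite <- S, <- P. unfold quad. destruct z1, z2; ceq; ring. }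
  assert (Q2: quad B (uc c) z2 = C0).
  { rewrite <- S, <- P. unfold quad. destruct z1, z2; ceq; ring. }
  assert (Hnm: Cnorm2 z1 * Cnorm2 z2 = 1) by (rewrite <- Cnorm2_mul, P; apply uc_norm; auto).
  pose proof (Cnorm2_add_le z1 z2) as A1. rewrite S in A1.
  pose proof (Cnorm2_nonneg z1). pose proof (Cnorm2_nonneg z2).
  destruct (Rtotal_order (Cnorm2 z1) (Cnorm2 z2)) as [Hl|[He|Hg]].
  - exists z1, z2. repeat split; auto.
  - exfalso. rewrite He in Hnm. assert (Cnorm2 z2 = 1) by nra. lra.
  - exists z2, z1. repeat split; auto.
    + rewrite <- S. destruct z1, z2; ceq; ring.
    + rewrite <- P. destruct z1, z2; ceq; ring.
Qed.


Theorem lemma4p2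
  (Gam : mat -> Prop) (ta tb : Cx) (x0 y0 : R) (c : Cx)
  (Hgrp : is_group Gam) (Hdisc : discrete Gam) (Htf : torsion_free Gam)
  (* stabiliser of infinity generated by a = transl ta, b = transl tb *)
  (Ha : Gam (transl ta)) (Hb : Gam (transl tb))
  (Hind : forall r s : R, Cadd (Cscale r ta) (Cscale s tb) = C0 -> r = 0 /\ s = 0)
  (Hstab : forall k, Gam k -> m21 k = C0 ->
     exists p q : Z,
       k = mmul (mpowZ (transl ta) p) (mpowZ (transl tb) q) \/
       k = mneg (mmul (mpowZ (transl ta) p) (mpowZ (transl tb) q)))
  (* maximal cusp neighbourhood: the lifts {h>1} have disjoint interiors *)
  (Hemb : forall k X, Gam k -> 1 < ph X -> 1 < ph (act k X) -> m21 k = C0)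
  (* the bumping point and the element g *)
  (Hx0 : 0 <= x0 < 1) (Hy0 : 0 <= y0 < 1) (Hxy : x0 <> 0 \/ y0 <> 0)
  (Hc : c <> C0)
  (Hg : Gam (Mat (Cmul c (Cadd (Cscale x0 ta) (Cscale y0 tb))) (Copp (Cinv c)) c C0))
  (HgA : act (Mat (Cmul c (Cadd (Cscale x0 ta) (Cscale y0 tb))) (Copp (Cinv c)) c C0) A00
         = mkpt (Cadd (Cscale x0 ta) (Cscale y0 tb)) 1)
  (HgH1 : forall X, H0 X ->
     Hinf (act (Mat (Cmul c (Cadd (Cscale x0 ta) (Cscale y0 tb))) (Copp (Cinv c)) c C0) X))
  (HgH2 : forall Y, Hinf Y -> exists X, H0 X /\
     act (Mat (Cmul c (Cadd (Cscale x0 ta) (Cscale y0 tb))) (Copp (Cinv c)) c C0) X = Y) :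
  let g := Mat (Cmul c (Cadd (Cscale x0 ta) (Cscale y0 tb))) (Copp (Cinv c)) c C0 in
  exists N0 : R, forall p q : Z,
    sqrt (IZR p ^ 2 + IZR q ^ 2) > N0 ->
    let gpq := mmul (mmul (mpowZ (transl ta) p) (mpowZ (transl tb) q)) g in
    (* the short arc is defined *)
    (exists zm zp : Cx,
       fixedpt gpq zm /\ fixedpt gpq zp /\ zm <> zp /\ Cmod zm < Cmod zp /\
       (forall z, fixedpt gpq z -> z = zm \/ z = zp) /\
       exists Cp Dp : pt,
         on_geod zm zp Cp /\ Hinf Cp /\ on_geod zm zp Dp /\ Hinf Dp /\ Cp <> Dp /\
         (forall X, on_geod zm zp X -> Hinf X -> X = Cp \/ X = Dp)) /\
    (* it is R-close to A, and embedded in M *)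
    (forall (zm zp : Cx) (Cp Dp : pt),
       fixedpt gpq zm -> fixedpt gpq zp -> zm <> zp -> Cmod zm < Cmod zp ->
       on_geod zm zp Cp -> Hinf Cp -> on_geod zm zp Dp -> Hinf Dp -> Cp <> Dp ->
       Cmod (Csub (pz Cp) zm) < Cmod (Csub (pz Dp) zm) ->
       (forall X, hseg (act (minv gpq) Dp) Cp X -> regionR Gam X) /\
       (forall X Y k, hseg (act (minv gpq) Dp) Cp X -> hseg (act (minv gpq) Dp) Cp Y ->
          Gam k -> act k X = Y -> X = Y)).
Proof.
  intros g.
  set (b0 := Cadd (Cscale x0 ta) (Cscale y0 tb)) in *.
  assert (Eg: g = GB c b0) by reflexivity.
  assert (HgG: Gam (GB c b0)) by exact Hg.
  assert (Hcn: Cnorm2 c = 1).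
  { apply (f_equal ph) in HgA. rewrite act_ph in HgA. cbn [ph pz m21 m22 A00] in HgA.
    replace (Cnorm2 (Cadd (Cmul c C0) C0)) with 0 in HgA by (destruct c; cunf; ring).
    assert (0 < Cnorm2 c) by (apply Cnorm2_pos; auto).
    replace (1 / (0 + Cnorm2 c * (1*1))) with (/ Cnorm2 c) in HgA by (field; lra).
    rewrite <- (Rinv_inv (Cnorm2 c)), HgA. apply Rinv_1. }
  destruct (lattice ta tb Hind) as [lam0 [Hl0 Hlat0]].
  destruct (shiftR_pos x0 y0 Hx0 Hy0 Hxy) as [m0 [Hm0 Hsh0]].
  set (lam := lam0 * Rmin 1 m0).
  assert (Hmin: 0 < Rmin 1 m0 /\ Rmin 1 m0 <= 1 /\ Rmin 1 m0 <= m0)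
    by (split; [apply Rmin_glb_lt; lra| split; [apply Rmin_l|apply Rmin_r]]).
  assert (Hlam: 0 < lam) by (unfold lam; nra).
  assert (Hlat: forall p q : Z, (p <> 0 \/ q <> 0)%Z ->
            Cnorm2 (Cadd (Cscale (IZR p) ta) (Cscale (IZR q) tb)) >= lam).
  { intros p q Hpq. pose proof (int_sq p q Hpq). pose proof (Hlat0 (IZR p) (IZR q)).
    assert (lam0 * (IZR p * IZR p + IZR q * IZR q) >= lam0 * 1) by (apply Rle_ge, Rmult_le_compat_l; lra).
    assert (lam <= lam0) by (unfold lam; nra). lra. }
  assert (Hbexp: forall p q : Z, Cadd b0 (Cadd (Cscale (IZR p) ta) (Cscale (IZR q) tb))
      = Cadd (Cscale (x0 + IZR p) ta) (Cscale (y0 + IZR q) tb))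
    by (intros; unfold b0; destruct ta, tb; ceq; ring).
  assert (Hsh: forall p q : Z, Cnorm2 (Cadd b0 (Cadd (Cscale (IZR p) ta) (Cscale (IZR q) tb))) >= lam).
  { intros. rewrite Hbexp. pose proof (Hlat0 (x0 + IZR p) (y0 + IZR q)). pose proof (Hsh0 p q).
    assert (lam0 * ((x0 + IZR p) * (x0 + IZR p) + (y0 + IZR q) * (y0 + IZR q)) >= lam0 * m0)
      by (apply Rle_ge, Rmult_le_compat_l; lra).
    assert (lam <= lam0 * m0) by (unfold lam; apply Rmult_le_compat_l; lra). lra. }
  set (r := Rmin (/100) (lam/16)).
  assert (Hr: 0 < r /\ r <= /100 /\ 16*r <= lam).
  { split; [apply Rmin_glb_lt; lra|split; [apply Rmin_l|]].
    pose proof (Rmin_r (/100) (lam/16)). fold r in H. lra. }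
  destruct Hr as [Hr0 [Hr1 Hr2]].
  set (M := Rmax 64 (136*42/r)).
  assert (HM1: 64 <= M) by apply Rmax_l.
  assert (HM2: 136*42/r <= M) by apply Rmax_r.
  exists (sqrt (2*(M/lam0 + 2))).
  intros p q HN gpq.
  set (w := Cadd (Cscale (IZR p) ta) (Cscale (IZR q) tb)).
  set (B := Cadd b0 w).
  assert (Egpq: gpq = GB c B).
  { unfold gpq. rewrite !mpowZ_transl, mmul_transl, Eg. apply mmul_transl_GB; auto. }
  clearbody gpq. subst gpq.
  assert (Hbeta: M <= Cnorm2 B).
  { apply sqrt_lt_0_alt in HN. unfold B, w. rewrite Hbexp.
    pose proof (Hlat0 (x0 + IZR p) (y0 + IZR q)).
    assert (S1: 2*(M/lam0 + 2) < IZR p * IZR p + IZR q * IZR q) by (simpl in HN; lra).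
    assert (x0*x0 <= 1) by nra. assert (y0*y0 <= 1) by nra.
    pose proof (pow2_ge_0 (IZR p + 2*x0)). pose proof (pow2_ge_0 (IZR q + 2*y0)).
    assert (S2: M/lam0 < (x0 + IZR p) * (x0 + IZR p) + (y0 + IZR q) * (y0 + IZR q)) by nra.
    assert (S3: M < lam0 * ((x0 + IZR p) * (x0 + IZR p) + (y0 + IZR q) * (y0 + IZR q))).
    { apply Rmult_lt_compat_l with (r := lam0) in S2; auto.
      replace (lam0 * (M/lam0)) with M in S2 by (field; lra). exact S2. }
    lra. }
  assert (HM64: 64 <= Cnorm2 B) by lra.
  split.
  - destruct (two_roots c B Hcn HM64) as [zm [zp [Q1 [Q2 [S [P Hlt]]]]]].
    exists zm, zp.
    assert (Hnm: Cnorm2 zm * Cnorm2 zp = 1) by (rewrite <- Cnorm2_mul, P; apply uc_norm; auto).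
    assert (nzm: zm <> C0) by (intro E; rewrite E in Hnm; cunf; lra).
    assert (nzp: zp <> C0) by (intro E; rewrite E in Hnm; cunf; lra).
    assert (Hne: zm <> zp) by (intro E; rewrite E in Hlt; lra).
    split; [apply fix_intro; auto|].
    split; [apply fix_intro; auto|].
    split; [auto|].
    split; [apply Cmod_lt'; auto|].
    split.
    + intros z Hz. destruct (fix_eq _ _ _ Hcn Hz) as [_ Hq]. apply (roots_uniq B (uc c)); auto.
    + apply inter_exist. apply (root_sep c B); auto.
  - intros zm zp Cp Dp Fm Fp Hne Hmod HC HCi HD HDi HCD Hord.
    destruct (fix_eq _ _ _ Hcn Fm) as [_ Qm]. destruct (fix_eq _ _ _ Hcn Fp) as [_ Qp].
    destruct (roots_rel _ _ _ _ Qm Qp Hne) as [S P].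
    apply Cmod_lt in Hmod.
    destruct (inter_order zm zp Cp Dp HC HCi HD HDi Hord) as [tC [tD [HtC0 [HtC1 [Ht [Hl [HCz HDz]]]]]]].
    pose proof (eps_bound c B zm zp tC Hcn S P Hmod HtC0 HtC1 Hl ltac:(lra)) as Eb. rewrite <- HCz in Eb.
    assert (He: Cnorm2 (pz Cp) <= r/42).
    { pose proof (Cnorm2_nonneg (pz Cp)).
      assert (rb: 136*42 <= r * Cnorm2 B).
      { assert (136*42/r * r <= M * r) by (apply Rmult_le_compat_r; lra).
        replace (136*42/r*r) with (136*42) in H0 by (field; lra). nra. }
      assert (Cnorm2 (pz Cp) * (136*42) <= Cnorm2 (pz Cp) * (r * Cnorm2 B)) by (apply Rmult_le_compat_l; lra).
      nra. }
    assert (Hcl: forall X, hseg (act (minv (GB c B)) Dp) Cp X -> close r X).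
    { intros X HX. apply (seg_close c B zm zp Cp Dp tC tD r); auto. }
    split.
    + intros X HX. apply (region Gam ta tb c b0 lam Hgrp Hstab Hemb Hc Hcn HgG Hlat Hsh r X); auto.
    + intros X Y k HX HY Hk E. apply (embed Gam ta tb c b0 lam Hgrp Hstab Hemb Hc Hcn HgG Hlat Hsh r X Y k); auto.
Qed.
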